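(* Let $R$ be an associative commutative ring with identity, $f=\frac{1}{1-X}\in R[[X]]$, and for $h\in R[[X]]$ let $\alpha[h]:g\mapsto h+g$ and $\mu[h]:g\mapsto hg$ be maps $R[[X]]\to R[[X]]$. Let $K$ be the group (under composition) generated by $\{\alpha[sf],\mu[f]\mid s\in R\}$ and let $L$ be the group generated by the maps $\{\,g\mapsto f\cdot(s+g)\mid s\in R\,\}$ (i.e. $\mu[f]\circ\alpha[s]$). Then $K=L$.
   Context: $R[[X]]$ is the ring of formal power series over $R$; $f=\sum_{k\ge0}X^k$ is invertible in $R[[X]]$, so all the listed maps are bijections of $R[[X]]$. *)

(* Defs.v *)
From HB Require Import structures.
From mathcomp Require Import all_boot all_algebra.
Set Implicit Arguments. Unset Strict Implicit. Unset Printing Implicit Defensive.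
Import GRing.Theory.
Local Open Scope ring_scope.

Definition fps (R : comPzRingType) := nat -> R.

Section FPS.
Variable R : comPzRingType.

Definition fps_add (a b : fps R) : fps R := fun n => a n + b n.
Definition fps_mul (a b : fps R) : fps R :=
  fun n => \sum_(i < n.+1) a i * b (n - i)%N.
Definition fps_const (s : R) : fps R := fun n => if n == 0%N then s else 0.
Definition fps_scale (s : R) (h : fps R) : fps R := fun n => s * h n.
(* f = 1/(1-X) = sum_k X^k *)
Definition fps_geom : fps R := fun _ => 1.

Definition alpha (h : fps R) : fps R -> fps R := fun g => fps_add h g.
Definition mu (h : fps R) : fps R -> fps R := fun g => fps_mul h g.
End FPS.

Inductive gen_group {T : Type} (S : (T -> T) -> Prop) : (T -> T) -> Prop :=
| gen_id : gen_group S id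
| gen_comp : forall s g, S s -> gen_group S g -> gen_group S (s \o g)
| gen_comp_inv : forall s s' g, S s -> cancel s s' -> cancel s' s ->
    gen_group S g -> gen_group S (s' \o g).

Definition K_gens (R : comPzRingType) (phi : fps R -> fps R) : Prop :=
  (exists s : R, phi = alpha (fps_scale s (fps_geom R))) \/ phi = mu (fps_geom R).

Definition L_gens (R : comPzRingType) (phi : fps R -> fps R) : Prop :=
  exists s : R, phi = (mu (fps_geom R)) \o (alpha (fps_const s)).

(* Main.v *)
Require Import Defs.
From mathcomp Require Import all_boot all_algebra.
From Stdlib Require Import FunctionalExtensionality.
Import GRing.Theory.
Local Open Scope ring_scope.

Section Aux.
Variable R : comPzRingType.
Local Notation f := (fps_geom R).
Definition fd : fps R := fun n => if n == 0%N then 1 else if n == 1%N then -1 else 0.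

Lemma geomE (h : fps R) n : fps_mul f h n = \sum_(i < n.+1) h i.
Proof.
rewrite /fps_mul (reindex_inj rev_ord_inj) /=.
apply: eq_bigr => i _; rewrite mul1r /= subSS subKn //; by rewrite -ltnS.
Qed.

Lemma fd0 (h : fps R) : fps_mul fd h 0 = h 0%N.
Proof. by rewrite /fps_mul big_ord_recl big_ord0 /fd /= mul1r addr0. Qed.

Lemma fdS (h : fps R) n : fps_mul fd h n.+1 = h n.+1 - h n.
Proof.
rewrite /fps_mul big_ord_recl big_ord_recl /= big1; last first.
  by move=> i _; rewrite /fd /bump /= mul0r.
by rewrite /fd /bump /= mul1r subn0 addn0 subn1 mulN1r addr0.
Qed.

Lemma f_fd (g : fps R) : fps_mul f (fps_mul fd g) = g.
Proof.
apply: functional_extensionality => n; rewrite geomE.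
elim: n => [|n IH]; first by rewrite big_ord_recl big_ord0 fd0 addr0.
by rewrite big_ord_recr /= IH fdS addrC subrK.
Qed.

Lemma fd_f (g : fps R) : fps_mul fd (fps_mul f g) = g.
Proof.
apply: functional_extensionality => -[|n]; first by rewrite fd0 geomE big_ord_recl big_ord0 addr0.
by rewrite fdS !geomE big_ord_recr /= addrAC subrr add0r.
Qed.

Lemma f_const_add s (g : fps R) :
  fps_mul f (fps_add (fps_const s) g) = fps_add (fps_scale s f) (fps_mul f g).
Proof.
apply: functional_extensionality => n.
rewrite /fps_add /fps_scale /fps_mul /fps_geom mulr1 -/(fps_mul f g).
rewrite (eq_bigr (fun i : 'I_n.+1 => fps_const s (n - i)%N + 1 * g (n - i)%N)); last first.
  by move=> i _; rewrite mulrDr mul1r.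
rewrite big_split /= big_ord_recr /= subnn /fps_const /= big1 ?add0r //.
move=> i _; rewrite subn_eq0 leqNgt ltn_ord //.
Qed.

Lemma add_const0 (g : fps R) : fps_add (fps_const 0) g = g.
Proof. apply: functional_extensionality => n; by rewrite /fps_add /fps_const; case: ifP; rewrite add0r. Qed.

End Aux.

Section Gen.
Variable T : Type.

Lemma gen_compC (S : (T -> T) -> Prop) g h :
  gen_group S g -> gen_group S h -> gen_group S (g \o h).
Proof.
elim => [|s g' Ss _ IH|s s' g' Ss c1 c2 _ IH] Hh.
- exact: Hh.
- exact: gen_comp Ss (IH Hh).
- exact: gen_comp_inv c1 c2 (IH Hh).
Qed.

Lemma gen_invE (S : (T -> T) -> Prop) :
  (forall s, S s -> exists s', cancel s s' /\ cancel s' s) ->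
  forall g, gen_group S g -> exists g', gen_group S g' /\ cancel g g' /\ cancel g' g.
Proof.
move=> Hinv g; elim => [|s g' Ss _ [h [Gh [c1 c2]]]|s s' g' Ss c1 c2 _ [h [Gh [d1 d2]]]].
- by exists id; split; [exact: gen_id|].
- have [s' [e1 e2]] := Hinv s Ss.
  exists (h \o s'); split; first by apply: gen_compC Gh (gen_comp_inv Ss e1 e2 (gen_id S)).
  by split=> x /=; rewrite ?c1 ?e1 ?e2 ?c2.
- exists (h \o s); split; first exact: gen_compC Gh (gen_comp Ss (gen_id S)).
  by split=> x /=; rewrite ?c1 ?c2 ?d1 ?d2.
Qed.

Lemma gen_sub (S U : (T -> T) -> Prop) :
  (forall s, S s -> gen_group U s) ->
  (forall s, U s -> exists s', cancel s s' /\ cancel s' s) ->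
  forall g, gen_group S g -> gen_group U g.
Proof.
move=> HS HU g; elim => [|s g' Ss _ IH|s s' g' Ss c1 c2 _ IH].
- exact: gen_id.
- exact: gen_compC (HS _ Ss) IH.
- have [h [Gh [d1 d2]]] := @gen_invE U HU _ (HS _ Ss).
  have -> : s' = h.
    apply: functional_extensionality => x.
    by rewrite -{1}(d2 x) c1.
  exact: gen_compC Gh IH.
Qed.
End Gen.

Theorem lemma8p1 (R : comPzRingType) :
  forall phi : fps R -> fps R,
    gen_group (K_gens (R:=R)) phi <-> gen_group (L_gens (R:=R)) phi.
Proof.
have addK : forall (a b : fps R), fps_add a (fps_add (fun n => - a n) b) = b.
  by move=> a b; apply: functional_extensionality => n; rewrite /fps_add /= addNKr.
have addK' : forall (a b : fps R), fps_add (fun n => - a n) (fps_add a b) = b.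
  by move=> a b; apply: functional_extensionality => n; rewrite /fps_add /= addKr.
have Linv : forall s, @L_gens R s -> exists s', cancel s s' /\ cancel s' s.
  move=> _ [c ->].
  exists (alpha (fun n => - fps_const c n) \o mu (fd R)); split=> x /=.
    by rewrite /mu fd_f /alpha addK'.
  by rewrite /alpha addK /mu f_fd.
have Kinv : forall s, @K_gens R s -> exists s', cancel s s' /\ cancel s' s.
  move=> _ [[c ->]|->].
    exists (alpha (fun n => - fps_scale c (fps_geom R) n)); split=> x /=.
      by rewrite /alpha addK'.
    by rewrite /alpha addK.
  exists (mu (fd R)); split=> x /=; rewrite /mu ?fd_f ?f_fd //.
move=> phi; split; apply: gen_sub => //.
- move=> _ [[c ->]|->].
  + have c1 : cancel (mu (fps_geom R) \o alpha (fps_const 0)) (mu (fd R)).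
      by move=> x /=; rewrite /alpha add_const0 /mu fd_f.
    have c2 : cancel (mu (fd R)) (mu (fps_geom R) \o alpha (fps_const 0)).
      by move=> x /=; rewrite /alpha add_const0 /mu f_fd.
    have -> : alpha (fps_scale c (fps_geom R)) =
      (mu (fps_geom R) \o alpha (fps_const c)) \o (mu (fd R) \o id).
      apply: functional_extensionality => x /=.
      by rewrite /mu /alpha f_const_add f_fd.
    apply: gen_comp; first by exists c.
    apply: (gen_comp_inv (s := mu (fps_geom R) \o alpha (fps_const 0))) c1 c2 (gen_id _).
    by exists 0.
  + have -> : mu (fps_geom R) = (mu (fps_geom R) \o alpha (fps_const 0)) \o id.
      by apply: functional_extensionality => x /=; rewrite /alpha add_const0.
    by apply: gen_comp; [exists 0|exact: gen_id].
- move=> _ [c ->].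
  have -> : mu (fps_geom R) \o alpha (fps_const c) =
    alpha (fps_scale c (fps_geom R)) \o (mu (fps_geom R) \o id).
    by apply: functional_extensionality => x /=; rewrite /mu /alpha f_const_add.
  apply: gen_comp; first by left; exists c.
  by apply: gen_comp; [right|exact: gen_id].
Qed.
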